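(* Let $k$ be an algebraically closed field, $P=k[X_1,\ldots,X_n]$, $\mathfrak t=\langle X_1,\ldots,X_n\rangle$, and $M$ a Noetherian $P$-module with $x_i$ the action of $X_i$ on $M$. For $r\ge1$ let $M^{(r)}=P/\mathfrak t^r\otimes_kM$ (a $k$-space isomorphic to $M^{\binom{r+n-1}{n}}$) with the commuting $k$-linear operators $x_i^{(r)}=1\otimes x_i-X_i\otimes1$, making $M^{(r)}$ a $P$-module via $X_i\mapsto x_i^{(r)}$; put $x^{(r)}=(x^{(r)}_1,\ldots,x^{(r)}_n)$. Then $M^{(r)}$ is a Noetherian $P$-module, $\sigma(x^{(r)},M^{(r)})=\sigma(x,M)$ for all $r\ge1$, and $\dim_kH_p(x^{(r)}-a,M^{(r)})<\infty$ for all $p$, all $a\in k^n$ and all $r\ge1$ (i.e. $i(x^{(r)}-a)<\infty$).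
   Context: For a commutative $k$-algebra $R$, an $R$-module $M$ and an $n$-tuple $y$ in $R$, the Koszul complex $\operatorname{Kos}(y,M)$ is $0\leftarrow M\leftarrow M\otimes_k\wedge^1k^n\leftarrow\cdots\leftarrow M\otimes_k\wedge^nk^n\leftarrow 0$ with differential $\partial(u\otimes e_{i_1}\wedge\cdots\wedge e_{i_p})=\sum_{s=1}^p(-1)^{s+1}y_{i_s}u\otimes e_{i_1}\wedge\cdots\wedge\widehat{e_{i_s}}\wedge\cdots\wedge e_{i_p}$, with homology $H_p(y,M)$. For $a\in k^n$, $y-a=(y_1-a_1,\ldots,y_n-a_n)$. Taylor spectrum $\sigma(y,M)$: the set of $a\in k^n$ with $\operatorname{Kos}(y-a,M)$ not exact. Index: $i(y)=\sum_{p=0}^n(-1)^{p+1}\dim_kH_p(y,M)$, with $i(y)<\infty$ meaning all dimensions are finite. *)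

(* Defs.v *)
From HB Require Import structures.
From mathcomp Require Import all_boot all_order all_algebra.
Set Implicit Arguments. Unset Strict Implicit. Unset Printing Implicit Defensive.
Import Order.TTheory GRing.Theory.
Local Open Scope ring_scope.

Section Koszul.
Variables (k : fieldType) (V : lmodType k) (n : nat).

(* M (x) /\^p k^n is encoded by chains C := {ffun {set 'I_n} -> V}
   supported on p-element subsets; f S is the coefficient of e_S
   (e_S = e_{i_1} /\ ... /\ e_{i_p}, i_1 < ... < i_p listing S). *)
Definition chain := {ffun {set 'I_n} -> V}.

Definition is_deg (p : nat) (f : chain) : Prop :=
  forall S : {set 'I_n}, #|S| != p -> f S = 0.

(* Koszul differential: d(u e_{i_1..i_p}) = sum_s (-1)^(s+1) y_{i_s} u e_{..^i_s..};
   the coefficient of e_T in d f collects s \notin T, s at (1-based) position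
   #{t in T | t < s} + 1 in T :|: [set s]. *)
Definition kdiff (y : 'I_n -> V -> V) (f : chain) : chain :=
  [ffun T : {set 'I_n} =>
     \sum_(s : 'I_n | s \notin T)
        ((-1) ^+ #|[set t in T | (t < s)%N]| : k) *: y s (f (s |: T))].

Definition kcycle (y : 'I_n -> V -> V) (p : nat) (z : chain) : Prop :=
  is_deg p z /\ kdiff y z = 0.

Definition kboundary (y : 'I_n -> V -> V) (p : nat) (z : chain) : Prop :=
  exists g : chain, is_deg p.+1 g /\ kdiff y g = z.

Definition koszul_exact (y : 'I_n -> V -> V) : Prop :=
  forall (p : nat) (z : chain), kcycle y p z -> kboundary y p z.

(* dim_k H_p(y,V) < oo : finitely many cycles span cycles modulo boundaries *)
Definition homology_findim (y : 'I_n -> V -> V) (p : nat) : Prop :=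
  exists (m : nat) (c : 'I_m -> chain),
    (forall j, kcycle y p (c j)) /\
    forall z, kcycle y p z ->
      exists (lam : 'I_m -> k) (g : chain),
        is_deg p.+1 g /\ z = \sum_(j < m) lam j *: c j + kdiff y g.

Definition shift_ops (y : 'I_n -> V -> V) (a : 'I_n -> k) : 'I_n -> V -> V :=
  fun i v => y i v - a i *: v.

Definition taylor_spectrum (y : 'I_n -> V -> V) : (('I_n -> k) -> Prop) :=
  fun a => ~ koszul_exact (shift_ops y a).

(* V with X_i acting by y_i is a P = k[X_1..X_n]-module *)
Definition is_Pmodule (y : 'I_n -> V -> V) : Prop :=
  (forall i (c : k) (u v : V), y i (c *: u + v) = c *: y i u + y i v) /\
  (forall i j (v : V), y i (y j v) = y j (y i v)).

Definition is_Psubmodule (y : 'I_n -> V -> V) (S : V -> Prop) : Prop :=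
  [/\ S 0, (forall u v, S u -> S v -> S (u + v)),
      (forall (c : k) u, S u -> S (c *: u)) & (forall i u, S u -> S (y i u))].

Definition noetherian_Pmodule (y : 'I_n -> V -> V) : Prop :=
  is_Pmodule y /\
  forall S : nat -> V -> Prop,
    (forall m, is_Psubmodule y (S m)) ->
    (forall m v, S m v -> S m.+1 v) ->
    exists N : nat, forall m, (N <= m)%N -> forall v, S m v <-> S N v.

End Koszul.

(* Monomials X^a of P/t^r: exponent vectors a with |a| < r *)
Definition mono (n r : nat) :=
  {a : {ffun 'I_n -> 'I_r} | (\sum_(i < n) (a i : nat) < r)%N}.

Section Mr.
Variables (k : fieldType) (M : lmodType k) (n r : nat).

(* M^(r) = P/t^r (x)_k M : sum_a X^a (x) f a *)
Definition Mr := {ffun mono n r -> M}.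

Definition mono_succ (i : 'I_n) (a b : mono n r) : bool :=
  [forall j : 'I_n, (val (val b j) == val (val a j) + (j == i))%N].

Definition mulX (i : 'I_n) (f : Mr) : Mr :=
  [ffun b : mono n r => \sum_(a : mono n r | mono_succ i a b) f a].

Definition xr (x : 'I_n -> M -> M) (i : 'I_n) (f : Mr) : Mr :=
  [ffun b : mono n r => x i (f b)] - mulX i f.

End Mr.

(* Main.v *)
Require Import Defs.
From HB Require Import structures.
From Stdlib Require Import Classical ClassicalEpsilon.
From mathcomp Require Import all_boot all_order all_algebra.
Set Implicit Arguments. Unset Strict Implicit. Unset Printing Implicit Defensive.
Import Order.TTheory GRing.Theory.
Local Open Scope ring_scope.
From mathcomp Require Import zify.
Section Lin.
Variables (k : fieldType) (V W : lmodType k).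
Definition linmap (f : V -> W) := forall (c : k) u v, f (c *: u + v) = c *: f u + f v.
Variable f : V -> W.
Hypothesis hf : linmap f.
Lemma lf0 : f 0 = 0.
Proof. have := hf 1 0 0; rewrite scaler0 add0r scale1r => /eqP. by rewrite eq_sym -subr_eq0 addrK => /eqP. Qed.
Lemma lfD u v : f (u + v) = f u + f v.
Proof. by have := hf 1 u v; rewrite !scale1r. Qed.
Lemma lfZ c u : f (c *: u) = c *: f u.
Proof. by have := hf c u 0; rewrite !addr0 lf0 addr0. Qed.
Lemma lfN u : f (- u) = - f u.
Proof. by rewrite -scaleN1r lfZ scaleN1r. Qed.
Lemma lfB u v : f (u - v) = f u - f v.
Proof. by rewrite lfD lfN. Qed.
Lemma lf_sum (I : Type) (r : seq I) (P : pred I) (F : I -> V) :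
  f (\sum_(i <- r | P i) F i) = \sum_(i <- r | P i) f (F i).
Proof. exact: (big_morph f lfD lf0). Qed.
End Lin.
Notation linop f := (linmap f).
Section Kos.
Variables (k : fieldType) (V : lmodType k) (n : nat).
Implicit Types (y : 'I_n -> V -> V) (f g : chain V n).

Definition lin_ops y := forall i, linop (y i).
Definition comm_ops y := forall i j v, y i (y j v) = y j (y i v).

Definition cnt (T : {set 'I_n}) (s : 'I_n) := #|[set t in T | (t < s)%N]|.

Lemma kdiffE y f T : kdiff y f T =
  \sum_(s : 'I_n | s \notin T) ((-1) ^+ cnt T s : k) *: y s (f (s |: T)).
Proof. by rewrite ffunE. Qed.

Section L.
Variable y : 'I_n -> V -> V.
Hypothesis hy : lin_ops y.

Lemma kdiff_lin (c : k) f g : kdiff y (c *: f + g) = c *: kdiff y f + kdiff y g.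
Proof.
apply/ffunP => T; rewrite !ffunE scaler_sumr -big_split; apply: eq_bigr => s _.
by rewrite !ffunE (hy s) scalerDr !scalerA mulrC.
Qed.
Lemma kdiff0 : kdiff y 0 = 0.
Proof. exact: (lf0 (kdiff_lin)). Qed.
Lemma kdiffD f g : kdiff y (f + g) = kdiff y f + kdiff y g.
Proof. exact: (lfD (kdiff_lin)). Qed.
Lemma kdiffZ c f : kdiff y (c *: f) = c *: kdiff y f.
Proof. exact: (lfZ (kdiff_lin)). Qed.
Lemma kdiffB f g : kdiff y (f - g) = kdiff y f - kdiff y g.
Proof. exact: (lfB (kdiff_lin)). Qed.

Lemma kdiff_deg p f : is_deg p.+1 f -> is_deg p (kdiff y f).
Proof.
move=> hf T hT; rewrite kdiffE big1 // => s sT; rewrite hf ?(lf0 (hy s)) ?scaler0 //.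
by rewrite cardsU1 sT add1n eqSS.
Qed.
Lemma kdiff_deg0 f : is_deg 0 f -> kdiff y f = 0.
Proof.
move=> hf; apply/ffunP => T; rewrite kdiffE ffunE big1 // => s sT.
by rewrite hf ?(lf0 (hy s)) ?scaler0 // cardsU1 sT.
Qed.
End L.
End Kos.
Lemma antisym_sum (W : zmodType) (n : nat) (F : 'I_n -> 'I_n -> W) :
  (forall s, F s s = 0) -> (forall s t, F t s = - F s t) ->
  \sum_s \sum_t F s t = 0.
Proof.
move=> F0 FA.
have -> : \sum_s \sum_t F s t =
   \sum_s \sum_t (F s t *+ (s < t)%N) + \sum_s \sum_t (F s t *+ (t < s)%N).
  rewrite -big_split; apply: eq_bigr => s _; rewrite -big_split; apply: eq_bigr => t _.
  case: (ltngtP s t) => h /=; rewrite ?mulr1n ?mulr0n ?addr0 ?add0r //.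
  by have -> : s = t by apply: val_inj. 
rewrite [X in _ + X]exchange_big /=.
rewrite [X in _ + X](eq_bigr (fun t => - \sum_s (F t s *+ (t < s)%N))).
  by rewrite sumrN subrr.
move=> t _; rewrite -sumrN; apply: eq_bigr => s _; by rewrite FA mulNrn.
Qed.

Lemma sign_odd (R : pzRingType) (e1 e2 : nat) : odd (e1 + e2) ->
  (-1) ^+ e1 = - ((-1) ^+ e2) :> R.
Proof.
rewrite oddD -[X in X = _]signr_odd -[X in _ = - X]signr_odd.
by case: (odd e1); case: (odd e2); rewrite //= ?expr0 ?expr1 ?opprK.
Qed.

Lemma cntU1 n (T : {set 'I_n}) (s t : 'I_n) : s \notin T ->
  cnt (s |: T) t = (cnt T t + (s < t))%N.
Proof.
move=> sT; rewrite /cnt.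
case: ltnP => h.
  have -> : [set u in s |: T | (u < t)%N] = s |: [set u in T | (u < t)%N].
    by apply/setP => u; rewrite !inE; case: eqP => [->|].
  by rewrite cardsU1 inE (negPf sT) addn1.
have -> : [set u in s |: T | (u < t)%N] = [set u in T | (u < t)%N].
  apply/setP => u; rewrite !inE; case: eqP => [->|//].
  by rewrite ltnNge h /= andbF.
by rewrite addn0.
Qed.

Lemma cntD1 n (T : {set 'I_n}) (s t : 'I_n) : s \in T ->
  cnt T t = (cnt (T :\ s) t + (s < t))%N.
Proof.
move=> sT; rewrite -cntU1 ?setD11 //; by rewrite setD1K.
Qed.
Section KosK.
Variables (k : fieldType) (V : lmodType k) (n : nat).
Variable y : 'I_n -> V -> V.
Hypotheses (hy : lin_ops y) (cy : comm_ops y).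

Lemma lt_neq_one (s t : 'I_n) : s != t -> ((s < t) + (t < s))%N = 1%N.
Proof.
move=> st; case: (ltngtP s t) => h //.
by rewrite (val_inj h) eqxx in st.
Qed.

Lemma kdiffK (f : chain V n) : kdiff y (kdiff y f) = 0.
Proof.
apply/ffunP => T; rewrite ffunE [RHS]ffunE.
pose F (s t : 'I_n) := if (s \notin T) && (t \notin T) && (s != t) then
   ((-1) ^+ (cnt T s + cnt (s |: T) t) : k) *: y s (y t (f (t |: (s |: T)))) else 0.
transitivity (\sum_s \sum_t F s t); last first.
  apply: antisym_sum => [s|s t]; first by rewrite /F eqxx andbF.
  rewrite /F; case tT: (t \notin T) => /=; last by rewrite ?andbF oppr0.
  case sT: (s \notin T) => /=; last by rewrite ?andbF oppr0.
  case: eqP => [->|/eqP ts]; first by rewrite eqxx oppr0.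
  rewrite eq_sym ts setUCA (cy t s) -scaleNr; congr (_ *: _).
  apply: sign_odd; rewrite !cntU1 //.
  have e : forall a b c d : nat, (a + (b + c) + (b + (a + d)) = (a+b).*2 + (c + d))%N.
    move=> a b c d; rewrite -addnn; lia.
  by rewrite e oddD odd_double addnC lt_neq_one // eq_sym.
rewrite big_mkcond; apply: eq_bigr => s _.
case sT: (s \in T) => /=.
  by rewrite big1 // => t _; rewrite /F sT.
rewrite ffunE (lf_sum (hy s)) scaler_sumr big_mkcond; apply: eq_bigr => t _.
rewrite /F sT in_setU1 /=; case: eqP => [->|/eqP ts]; first by rewrite eqxx andbF.
rewrite eq_sym ts andbT; case: (t \in T) => //=.
rewrite /cnt; set c := (-1) ^+ _; set d := (-1) ^+ _; set v := y t _.

by rewrite (lfZ (hy s) d v) scalerA -exprD.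
Qed.
End KosK.
Lemma sign2 (R : pzRingType) c : ((-1) ^+ c * (-1) ^+ c = 1 :> R).
Proof. by rewrite -exprD addnn -signr_odd odd_double expr0. Qed.

Section Homot.
Variables (k : fieldType) (V : lmodType k) (n : nat).
Variable y : 'I_n -> V -> V.
Hypotheses (hy : lin_ops y).

Definition wedge (i : 'I_n) (f : chain V n) : chain V n :=
  [ffun S : {set 'I_n} => if i \in S then ((-1) ^+ cnt S i : k) *: f (S :\ i) else 0].
Definition cw (g : V -> V) (f : chain V n) : chain V n := [ffun S : {set 'I_n} => g (f S)].

Lemma homotopy i (z : chain V n) :
  kdiff y (wedge i z) + wedge i (kdiff y z) = cw (y i) z.
Proof.
apply/ffunP => T; rewrite !ffunE.
case iT: (i \in T).
  rewrite [X in _ + _ *: X](bigD1 i) /=; last by rewrite setD11.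
  rewrite setD1K // scalerDr addrCA.
  have h : #|[set t in T :\ i | (t < i)%N]| = cnt T i by rewrite (cntD1 i iT) ltnn addn0.
  rewrite h scalerA sign2 scale1r.
  rewrite -[RHS]addr0; congr (_ + _).
  rewrite [X in _ + _ *: X](eq_bigl (fun s => s \notin T)); last first.
    move=> s; rewrite !inE negb_and negbK; case: eqP => [->|] /=; by rewrite ?iT ?andbT.
  rewrite scaler_sumr -big_split big1 // => s sT'.
  have si : s != i by apply: contraNneq sT' => ->.
  rewrite !ffunE in_setU1 iT orbT.
  have -> : (s |: T) :\ i = s |: (T :\ i).
    by apply/setP => u; rewrite !inE; case: eqP => // ->; rewrite eq_sym (negPf si).
  rewrite [LHS]/= (lfZ (hy s) ((-1) ^+ cnt (s |: T) i)) !scalerA -scalerDl.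
  rewrite -!exprD (@sign_odd _ (cnt T s + cnt (s |: T) i) (cnt T i + cnt (T :\ i) s)).
    by rewrite addNr scale0r.
  rewrite (cntU1 _ sT') (cntD1 s iT).
  have e : forall a b c d : nat, (a + c + (b + d) + (b + a) = (a+b).*2 + (c + d))%N.
    move=> a b c d; rewrite -addnn; lia.
  by rewrite e oddD odd_double addnC lt_neq_one.
rewrite addr0 (bigD1 i) /=; last by rewrite iT.
rewrite big1 ?addr0.
  rewrite !ffunE setU11 setU1K ?iT // (lfZ (hy i)) scalerA (cntU1 _ (negbT iT)) ltnn addn0.
  by rewrite sign2 scale1r.
move=> s /andP [sT si]; rewrite !ffunE in_setU1 eq_sym (negPf si) iT /=.
by rewrite (lf0 (hy s)) scaler0.
Qed.

Lemma kdiff_cw j (f : chain V n) (cy : comm_ops y) :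
  kdiff y (cw (y j) f) = cw (y j) (kdiff y f).
Proof.
apply/ffunP => T; rewrite !ffunE (lf_sum (hy j)); apply: eq_bigr => s _.
by rewrite ffunE (lfZ (hy j)) cy.
Qed.
End Homot.
Section Ext.
Variables (k : fieldType) (V W : lmodType k) (n : nat).

Definition Ex (U : lmodType k) (y : 'I_n -> U -> U) (T : U -> Prop) (q : nat) :=
  forall z : chain U n, is_deg q z -> kdiff y z = 0 -> (forall S, T (z S)) ->
  exists g : chain U n, [/\ is_deg q.+1 g, (forall S, T (g S)) & kdiff y g = z].

Definition cmap (p : V -> W) (f : chain V n) : chain W n := [ffun S => p (f S)].

Variables (y : 'I_n -> V -> V) (w : 'I_n -> W -> W) (p : V -> W).
Implicit Types f g : chain V n.
Hypotheses (hy : lin_ops y) (hw : lin_ops w) (hp : linmap p).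

Lemma cmap_lin c f g : cmap p (c *: f + g) = c *: cmap p f + cmap p g.
Proof. by apply/ffunP => S; rewrite !ffunE hp. Qed.
Lemma cmapB f g : cmap p (f - g) = cmap p f - cmap p g.
Proof. exact: (lfB cmap_lin). Qed.
Lemma cmap_deg q f : is_deg q f -> is_deg q (cmap p f).
Proof. by move=> hf S hS; rewrite ffunE hf // (lf0 hp). Qed.

Lemma kdiff_cmap (T : V -> Prop) f :
  (forall i v, T v -> p (y i v) = w i (p v)) -> (forall S, T (f S)) ->
  kdiff w (cmap p f) = cmap p (kdiff y f).
Proof.
move=> hi hf; apply/ffunP => S; rewrite !ffunE (lf_sum hp); apply: eq_bigr => s _.
by rewrite (lfZ hp) hi // ffunE.
Qed.

Lemma sub_sum (T : V -> Prop) (I : Type) (r : seq I) (P : pred I) (F : I -> V) :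
  is_Psubmodule y T -> (forall i, P i -> T (F i)) -> T (\sum_(i <- r | P i) F i).
Proof.
case=> T0 TD _ _ hF; elim/big_ind: _ => //.
Qed.

Lemma kdiff_sub (T : V -> Prop) f : is_Psubmodule y T -> (forall S, T (f S)) ->
  forall S, T (kdiff y f S).
Proof.
move=> hT hf S; rewrite ffunE; apply: sub_sum => // s _.
case: hT => _ _ TZ Ty; exact/TZ/Ty.
Qed.

Lemma sub_opp (T : V -> Prop) v : is_Psubmodule y T -> T v -> T (- v).
Proof. by case=> _ _ TZ _ hv; rewrite -scaleN1r; apply: TZ. Qed.

Variables (sg : W -> V) (T L : V -> Prop).
Hypotheses (hs : linmap sg) (psg : forall u, p (sg u) = u) (Tsg : forall u, T (sg u))
  (LT : forall v, L v -> T v) (ker : forall v, T v -> p v = 0 -> L v)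
  (hT : is_Psubmodule y T) (hi : forall i v, T v -> p (y i v) = w i (p v))
  (cy : comm_ops y).

Lemma ex_ext q : Ex w (fun _ => True) q -> Ex y L q -> Ex y T q.
Proof.
move=> EW EL z zd zc zT.
have [g' [g'd _ g'e]] : exists g' : chain W n,
    [/\ is_deg q.+1 g', (forall S : {set 'I_n}, True) & kdiff w g' = cmap p z].
  apply: (EW (cmap p z)) => //; first exact: cmap_deg.
  by rewrite (kdiff_cmap hi zT) zc; apply/ffunP => S; rewrite !ffunE (lf0 hp).
pose gh : chain V n := [ffun S => sg (g' S)].
have ghT : forall S, T (gh S) by move=> S; rewrite ffunE.
have ghd : is_deg q.+1 gh by move=> S hS; rewrite ffunE g'd // (lf0 hs).
have pgh : cmap p gh = g' by apply/ffunP => S; rewrite !ffunE psg.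
pose z' := z - kdiff y gh.
have z'T : forall S, T (z' S).
  move=> S; have := kdiff_sub hT ghT S; rewrite /z' !ffunE => h.
  case: (hT) => _ TD _ _; apply: (TD _ _ (zT S)); exact: sub_opp.
have [w' [w'd w'L w'e]] : exists w' : chain V n,
    [/\ is_deg q.+1 w', (forall S, L (w' S)) & kdiff y w' = z'].
  apply: (EL z').
  - move=> S hS; have := kdiff_deg hy ghd hS; rewrite /z' !ffunE zd // => ->.
    by rewrite subrr.
  - by rewrite /z' (kdiffB hy) kdiffK // zc subrr.
  move=> S; apply: ker => //.
  have e1 : cmap p z' = 0 by rewrite /z' cmapB -(kdiff_cmap hi ghT) pgh g'e subrr.
  by have := congr1 (fun h : chain W n => h S) e1; rewrite !ffunE.
exists (gh + w'); split.
- by move=> S hS; rewrite ffunE ghd // w'd // addr0.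
- by move=> S; rewrite ffunE; case: (hT) => _ TD _ _; apply: TD => //; apply: LT.
- by rewrite (kdiffD hy) w'e /z' addrC subrK.
Qed.
End Ext.
Section Chase.
Variables (k : fieldType) (V W : lmodType k) (n : nat).
Variables (y : 'I_n -> V -> V) (w : 'I_n -> W -> W) (p : V -> W) (sg : W -> V).
Variable L : V -> Prop.
Hypotheses (hy : lin_ops y) (cy : comm_ops y) (hw : lin_ops w) (hp : linmap p)
  (hs : linmap sg) (psg : forall u, p (sg u) = u)
  (hi : forall i v, p (y i v) = w i (p v))
  (Lp : forall v, L v -> p v = 0) (pL : forall v, p v = 0 -> L v).


Lemma ex_chase q : Ex y (fun _ => True) q -> ((0 < q)%N -> Ex y L q.-1) ->
  Ex w (fun _ => True) q.
Proof.
move=> EV EL z zd zc _.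
have hi' : forall i v, True -> p (y i v) = w i (p v) by move=> i v _; exact: hi.
pose zh := cmap sg z.
have zhd : is_deg q zh := cmap_deg hs zd.
have pzh : cmap p zh = z by apply/ffunP => S; rewrite !ffunE psg.
have dzhL : forall S, L (kdiff y zh S).
  move=> S; apply: pL.
  have := congr1 (fun h : chain W n => h S) (@kdiff_cmap _ _ _ _ y w p hp (fun _ => True) zh hi' (fun _ => I)).
  rewrite pzh zc ffunE => h; move: h; rewrite {1}ffunE => <- //.
have [w' [w'd w'L w'e]] : exists w' : chain V n,
    [/\ is_deg q w', (forall S, L (w' S)) & kdiff y w' = kdiff y zh].
  case: q EV EL z zd zc zh zhd pzh dzhL => [|q] EV EL z zd zc zh zhd pzh dzhL.
    exists 0; split => //.
    - by move=> S _; rewrite ffunE.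
    - by move=> S; apply: pL; rewrite ffunE (lf0 hp).
    - by rewrite (kdiff_deg0 hy zhd) (kdiff0 hy).
  have [g [gd gL ge]] := EL isT (kdiff y zh) (kdiff_deg hy zhd) (kdiffK hy cy zh) dzhL.
  by exists g.
have hd : is_deg q (zh - w').
  by move=> S hS; rewrite ffunE zhd // ffunE w'd // oppr0 addr0.
have hc : kdiff y (zh - w') = 0 by rewrite (kdiffB hy) w'e subrr.
have [g [gd _ ge]] := EV (zh - w') hd hc (fun _ => I).
exists (cmap p g); split => //; first exact: cmap_deg.
rewrite (@kdiff_cmap _ _ _ _ y w p hp (fun _ => True) g hi' (fun _ => I)) ge (cmapB hp) pzh.
have -> : cmap p w' = 0 by apply/ffunP => S; rewrite !ffunE Lp.
by rewrite subr0.
Qed.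
End Chase.
Section Acc.
Variables (k : fieldType) (V W : lmodType k) (n : nat).

Definition ACCin (U : lmodType k) (y : 'I_n -> U -> U) (T : U -> Prop) :=
  forall S : nat -> U -> Prop, (forall m, is_Psubmodule y (S m)) ->
  (forall m v, S m v -> S m.+1 v) -> (forall m v, S m v -> T v) ->
  exists N : nat, forall m, (N <= m)%N -> forall v, S m v <-> S N v.

Lemma chain_mono (U : Type) (S : nat -> U -> Prop) :
  (forall m v, S m v -> S m.+1 v) -> forall m m' v, (m <= m')%N -> S m v -> S m' v.
Proof.
move=> hS m m' v /subnK <-; elim: (m' - m)%N => [|d IH] //= hv.
by rewrite addSn; apply/hS/IH.
Qed.

Variables (y : 'I_n -> V -> V) (w : 'I_n -> W -> W) (p : V -> W).
Variables (T L : V -> Prop).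
Hypotheses (hp : linmap p) (hL : is_Psubmodule y L) (LT : forall v, L v -> T v)
  (ker : forall v, T v -> p v = 0 -> L v)
  (hi : forall i v, T v -> p (y i v) = w i (p v)).

Lemma acc_ext : ACCin w (fun _ => True) -> ACCin y L -> ACCin y T.
Proof.
move=> AW AL S Ssub Sinc ST.
have [N1 h1] : exists N, forall m, (N <= m)%N -> forall v,
    (S m v /\ L v) <-> (S N v /\ L v).
  apply: (AL (fun m v => S m v /\ L v)).
- move=> m; case: (Ssub m) => S0 SD SZ Sy; case: hL => L0 LD LZ Ly; split.
  + by split.
  + by move=> u v [? ?] [? ?]; split; [apply: SD | apply: LD].
  + by move=> c u [? ?]; split; [apply: SZ | apply: LZ].
  + by move=> i u [? ?]; split; [apply: Sy | apply: Ly].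
- by move=> m v [? ?]; split => //; apply: Sinc.
- by move=> m v [].
have [N2 h2] : exists N, forall m, (N <= m)%N -> forall u,
    (exists v, S m v /\ p v = u) <-> (exists v, S N v /\ p v = u).
  apply: (AW (fun m u => exists v, S m v /\ p v = u)).
- move=> m; case: (Ssub m) => S0 SD SZ Sy; split.
  + by exists 0; split => //; rewrite (lf0 hp).
  + move=> _ _ [u [? <-]] [v [? <-]]; exists (u + v); split; first exact: SD.
    exact: (lfD hp).
  + move=> c _ [u [? <-]]; exists (c *: u); split; first exact: SZ.
    exact: (lfZ hp).
  + move=> i _ [u [? <-]]; exists (y i u); split; first exact: Sy.
    by apply: hi; apply: (ST m).
- by move=> m _ [v [? <-]]; exists v; split => //; apply: Sinc.
- by [].
exists (maxn N1 N2) => m hm v; split; last first.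
  by apply: chain_mono.
move=> hv.
have [w' [w'S w'e]] : exists w', S N2 w' /\ p w' = p v.
  by apply/(h2 m (leq_trans (leq_maxr _ _) hm)); exists v.
have Smw : S m w' by apply: (chain_mono Sinc (leq_trans (leq_maxr _ _) hm)).
have hd : S m (v - w').
  case: (Ssub m) => _ SD SZ _; apply: SD => //; rewrite -scaleN1r; exact: SZ.
have Ld : L (v - w').
  apply: ker; first exact: (ST m).
  by rewrite (lfB hp) w'e subrr.
have [hd1 _] := (h1 m (leq_trans (leq_maxl _ _) hm) (v - w')).1 (conj hd Ld).
have hdN : S (maxn N1 N2) (v - w') by apply: (chain_mono Sinc (leq_maxl _ _)).
have hwN : S (maxn N1 N2) w' by apply: (chain_mono Sinc (leq_maxr _ _)).
case: (Ssub (maxn N1 N2)) => _ SD _ _.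
by have := SD _ _ hdN hwN; rewrite subrK.
Qed.
End Acc.
Section Supp.
Variables (k : fieldType) (I : finType) (W : lmodType k) (n : nat).
Local Notation V := {ffun I -> W}.

Definition supp (A : {set I}) (f : V) : Prop := forall c, c \notin A -> f c = 0.
Definition evb (b : I) (f : V) : W := f b.
Definition sgb (b : I) (u : W) : V := [ffun c => if c == b then u else 0].

Lemma evb_lin b : linmap (evb b).
Proof. by move=> c u v; rewrite /evb !ffunE. Qed.
Lemma sgb_lin b : linmap (sgb b).
Proof.
move=> c u v; apply/ffunP => x; rewrite !ffunE; case: eqP => _ //.
by rewrite scaler0 addr0.
Qed.

Lemma supp0 f : supp set0 f -> f = 0.
Proof. by move=> h; apply/ffunP => c; rewrite ffunE h ?inE. Qed.

Variables (y : 'I_n -> V -> V) (w : 'I_n -> W -> W) (good : {set I} -> Prop).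
Hypotheses (hy : lin_ops y) (cy : comm_ops y) (hw : lin_ops w)
  (stab : forall A, good A -> is_Psubmodule y (supp A))
  (step : forall A, good A -> A != set0 -> exists2 b, b \in A &
      good (A :\ b) /\ forall i f, supp A f -> y i f b = w i (f b)).

Lemma supp_ind (P : {set I} -> Prop) :
  (forall A, good A -> A = set0 -> P A) ->
  (forall A b, good A -> b \in A -> good (A :\ b) ->
      (forall i f, supp A f -> y i f b = w i (f b)) -> P (A :\ b) -> P A) ->
  forall A, good A -> P A.
Proof.
move=> h0 hS A; move: {2}#|A| (leqnn #|A|) => m; elim: m A => [|m IH] A hA gA.
  by apply: h0 => //; apply/eqP; rewrite -cards_eq0 -leqn0.
case: (eqVneq A set0) => [eA|nA]; first exact: h0.
have [b bA [gb hb]] := step gA nA.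
apply: (hS A b) => //; apply: IH => //.
by rewrite -ltnS (cardsD1 b A) bA add1n ltnS in hA.
Qed.

Lemma ex_supp q : Ex w (fun _ => True) q -> forall A, good A -> Ex y (supp A) q.
Proof.
move=> EW; apply: supp_ind.
  move=> A _ -> z zd zc zT; exists 0; split.
  - by move=> S _; rewrite ffunE.
  - by move=> S c _; rewrite !ffunE.
  - rewrite (kdiff0 hy); apply/ffunP => S; rewrite ffunE; symmetry; exact: supp0.
move=> A b gA bA gb hb EL.
apply: (ex_ext hy (evb_lin b) (sg := sgb b) (L := supp (A :\ b)) (sgb_lin b) _ _ _ _ (stab gA) _ cy EW EL).
- by move=> u; rewrite /evb ffunE eqxx.
- by move=> u c cA; rewrite ffunE; case: eqP => // ec; rewrite ec bA in cA.
- by move=> f hf c cA; apply: hf; rewrite !inE negb_and cA orbT.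
- move=> f hf fb c; rewrite !inE negb_and negbK; case: eqP => [->|_] //= cA.
  exact: hf.
- by move=> i f hf; rewrite /evb hb.
Qed.

Lemma acc_supp : ACCin w (fun _ => True) -> forall A, good A -> ACCin y (supp A).
Proof.
move=> AW; apply: supp_ind.
  move=> A _ -> S Ssub _ ST; exists 0%N => m _ v; split => hv.
  - have -> : v = 0 by apply: supp0; apply: (ST m).
    by case: (Ssub 0%N).
  - have -> : v = 0 by apply: supp0; apply: (ST 0%N).
    by case: (Ssub m).
move=> A b gA bA gb hb AL.
apply: (acc_ext (p := evb b) (T := supp A) (evb_lin b) (stab gb) _ _ AW AL).
- move=> f hf fb c; rewrite !inE negb_and negbK; case: eqP => [->|_] //= cA.
  exact: hf.
- by move=> i f hf; rewrite /evb hb.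
Qed.
End Supp.
Section Fin.
Variables (k : fieldType) (V : lmodType k) (n : nat).
Variable y : 'I_n -> V -> V.
Hypotheses (hy : lin_ops y) (cy : comm_ops y).
Local Notation Y := (fun i => @cw k V n (y i)).

Lemma ACCin_mono (U : lmodType k) (z : 'I_n -> U -> U) (T T' : U -> Prop) :
  ACCin z T -> (forall v, T' v -> T v) -> ACCin z T'.
Proof. move=> A h S h1 h2 h3; apply: A => // m v /h3; exact: h. Qed.

Lemma cw_lin : lin_ops Y.
Proof. by move=> i c f g; apply/ffunP => S; rewrite !ffunE hy. Qed.
Lemma cw_comm : comm_ops Y.
Proof. by move=> i j f; apply/ffunP => S; rewrite !ffunE cy. Qed.

Lemma acc_chain : ACCin y (fun _ => True) ->
  ACCin Y (fun _ : chain V n => True).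
Proof.
move=> AV; apply: (ACCin_mono (T := supp setT)); last by move=> f _ c; rewrite inE.
apply: (@acc_supp k _ V n _ y (fun _ => True)) => //.
- move=> A _; split.
  + by move=> c _; rewrite ffunE.
  + by move=> u v hu hv c cA; rewrite ffunE hu // hv // addr0.
  + by move=> c u hu x xA; rewrite ffunE hu // scaler0.
  + by move=> i u hu x xA; rewrite ffunE hu // (lf0 (hy i)).
- move=> A _ /set0Pn [b bA]; exists b => //; split => // i f _.
  by rewrite ffunE.
Qed.

Inductive gen (U : lmodType k) (z : 'I_n -> U -> U) (G : seq U) : U -> Prop :=
| gen_base v : v \in G -> gen z G v
| gen0 : gen z G 0
| genD u v : gen z G u -> gen z G v -> gen z G (u + v)
| genZ c u : gen z G u -> gen z G (c *: u)
| genY i u : gen z G u -> gen z G (z i u).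

Lemma gen_sub (U : lmodType k) (z : 'I_n -> U -> U) (G : seq U) :
  is_Psubmodule z (gen z G).
Proof. split; [exact: gen0 | exact: genD | exact: genZ | exact: genY]. Qed.

Lemma gen_in (U : lmodType k) (z : 'I_n -> U -> U) (G : seq U) (T : U -> Prop) :
  is_Psubmodule z T -> (forall v, v \in G -> T v) -> forall v, gen z G v -> T v.
Proof.
case=> T0 TD TZ Ty hG v; elim => [u /hG //|//|u w _ hu _ hw|c u _ hu|i u _ hu].
- exact: TD.
- exact: TZ.
- exact: Ty.
Qed.

Lemma gen_cons (U : lmodType k) (z : 'I_n -> U -> U) (G : seq U) a v :
  gen z G v -> gen z (a :: G) v.
Proof.
elim => [u hu|||c u _ hu|i u _ hu].
- by apply: gen_base; rewrite inE hu orbT.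
- exact: gen0.
- by move=> *; apply: genD.
- exact: genZ.
- exact: genY.
Qed.

Lemma fg (U : lmodType k) (z : 'I_n -> U -> U) (T : U -> Prop) :
  is_Psubmodule z T -> ACCin z T ->
  exists G : seq U, (forall v, v \in G -> T v) /\ forall v, T v -> gen z G v.
Proof.
move=> hT A; apply: NNPP => nE.
have hpick : forall G : seq U, exists v, (forall u, u \in G -> T u) -> T v /\ ~ gen z G v.
  move=> G; apply: NNPP => nv; apply: nE; exists G.
  apply: NNPP => nc; apply: (nv); exists 0 => hG; exfalso; apply: (nc); split => // v Tv.
  apply: NNPP => ng; apply: (nv); exists v => _; by split.
have [pick hp] : exists pick : seq U -> U, forall G, (forall u, u \in G -> T u) ->
    T (pick G) /\ ~ gen z G (pick G).
  exists (fun G => proj1_sig (constructive_indefinite_description _ (hpick G))).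
  move=> G; exact: (proj2_sig (constructive_indefinite_description _ (hpick G))).
pose F := fix F m := if m is m'.+1 then pick (F m') :: F m' else [::].
have FT : forall m u, u \in F m -> T u.
  elim => [|m IH] u //=; rewrite inE => /orP [/eqP ->|]; last exact: IH.
  by case: (hp _ IH).
have [N hN] := A (fun m => gen z (F m)) (fun m => gen_sub z (F m))
   (fun m v => @gen_cons U z (F m) (pick (F m)) v) (fun m => gen_in hT (FT m)).
have := (hN N.+1 (leqnSn N) (pick (F N))).1 (gen_base _ (mem_head _ _)).
by case: (hp _ (FT N)).
Qed.
End Fin.
Section Fin2.
Variables (k : fieldType) (V : lmodType k) (n : nat).
Variable y : 'I_n -> V -> V.
Hypotheses (hy : lin_ops y) (cy : comm_ops y).
Local Notation Y := (fun i => @cw k V n (y i)).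

Lemma wedge_deg i p (f : chain V n) : is_deg p f -> is_deg p.+1 (wedge i f).
Proof.
move=> hf S hS; rewrite ffunE; case: ifP => // iS.
rewrite hf ?scaler0 //; move: hS; rewrite (cardsD1 i S) iS add1n eqSS //.
Qed.

Lemma findim_of_acc : ACCin y (fun _ => True) -> forall p, homology_findim y p.
Proof.
move=> AV p.
pose Z := fun f : chain V n => is_deg p f /\ kdiff y f = 0.
have hZ : is_Psubmodule Y Z.
  split.
  - by split; [move=> S _; rewrite ffunE | exact: kdiff0].
  - move=> u v [ud uc] [vd vc]; split; last by rewrite (kdiffD hy) uc vc addr0.
    by move=> S hS; rewrite ffunE ud // vd // addr0.
  - move=> c u [ud uc]; split; last by rewrite (kdiffZ hy) uc scaler0.
    by move=> S hS; rewrite ffunE ud // scaler0.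
  - move=> i u [ud uc]; split; last by rewrite (kdiff_cw hy) // uc; apply/ffunP => S; rewrite !ffunE (lf0 (hy i)).
    by move=> S hS; rewrite ffunE ud // (lf0 (hy i)).
have AZ : ACCin Y Z by apply: (ACCin_mono (acc_chain hy AV)).
have [G [GZ Ggen]] := fg hZ AZ.
exists (size G), (fun j => nth 0 G j); split.
  by move=> j; apply: GZ; rewrite mem_nth.
move=> z /Ggen; elim.
- move=> v vG; exists (fun j : 'I_(size G) => if nat_of_ord j == index v G then 1 else 0), 0.
  split; first by move=> S _; rewrite ffunE.
  rewrite (kdiff0 hy) addr0 (bigD1 (Ordinal (etrans (index_mem v G) vG) : 'I_(size G))) //=.
  rewrite eqxx scale1r nth_index // big1 ?addr0 // => j /negPf jn.
  have -> : (nat_of_ord j == index v G) = false.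
    by apply/negbTE; apply: contraFN jn => /eqP e; apply/eqP/val_inj.
  by rewrite scale0r.
- exists (fun=> 0), 0; split; first by move=> S _; rewrite ffunE.
  by rewrite (kdiff0 hy) addr0 big1 // => j _; rewrite scale0r.
- move=> u v _ [l1 [g1 [g1d ->]]] _ [l2 [g2 [g2d ->]]].
  exists (fun j => l1 j + l2 j), (g1 + g2); split.
    by move=> S hS; rewrite ffunE g1d // g2d // addr0.
  rewrite (kdiffD hy) addrACA -big_split /=; congr (_ + _).
  by apply: eq_bigr => j _; rewrite scalerDl.
- move=> c u _ [l1 [g1 [g1d ->]]].
  exists (fun j => c * l1 j), (c *: g1); split.
    by move=> S hS; rewrite ffunE g1d // scaler0.
  rewrite (kdiffZ hy) scalerDr scaler_sumr; congr (_ + _).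
  by apply: eq_bigr => j _; rewrite scalerA.
- move=> i u _ [l1 [g1 [g1d ->]]].
  exists (fun=> 0), (\sum_(j < size G) l1 j *: wedge i (nth 0 G j) + cw (y i) g1).
  split.
    move=> S hS; rewrite ffunE sum_ffunE ffunE g1d // (lf0 (hy i)) addr0.
    rewrite big1 // => j _; rewrite ffunE.
    have [jd _] := GZ (nth 0 G j) (mem_nth 0 (ltn_ord j)).
    by rewrite (wedge_deg i jd hS) scaler0.
  rewrite [X in _ = X + _]big1 ?add0r; last by move=> j _; rewrite scale0r.
  rewrite (kdiffD hy) (kdiff_cw hy) // (lfD (cw_lin hy i)); congr (_ + _).
  rewrite (lf_sum (kdiff_lin hy)) (lf_sum (cw_lin hy i)); apply: eq_bigr => j _.
  rewrite (kdiffZ hy) (lfZ (cw_lin hy i)); congr (_ *: _).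
  have [_ jc] := GZ (nth 0 G j) (mem_nth 0 (ltn_ord j)).
  have w0 : wedge i (0 : chain V n) = 0.
    by apply/ffunP => S; rewrite !ffunE; case: ifP => _; rewrite ?scaler0.
  by have := homotopy hy i (nth 0 G j); rewrite jc w0 addr0 => ->.
Qed.
End Fin2.
Section MrProps.
Variables (k : fieldType) (M : lmodType k) (n r : nat).
Local Notation mono := (mono n r).
Local Notation Mr := (Mr M n r).

Definition mval (a : mono) (t : 'I_n) : nat := val (val a t).

Lemma mono_succP i (a b : mono) :
  reflect (forall t, mval b t = (mval a t + (t == i))%N) (mono_succ i a b).
Proof.
apply: (iffP forallP) => h t; first exact/eqP/h.
exact/eqP/h.
Qed.

Lemma mono_inj (a b : mono) : (forall t, mval a t = mval b t) -> a = b.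
Proof.
by move=> h; apply: val_inj; apply/ffunP => t; apply: val_inj; apply: h.
Qed.

Lemma succ_uniq i (a c1 c2 : mono) : mono_succ i a c1 -> mono_succ i a c2 -> c1 = c2.
Proof.
move=> /mono_succP h1 /mono_succP h2; apply: mono_inj => t; by rewrite h1 h2.
Qed.

Lemma succ_uniq_l i (a1 a2 c : mono) : mono_succ i a1 c -> mono_succ i a2 c -> a1 = a2.
Proof.
move=> /mono_succP h1 /mono_succP h2; apply: mono_inj => t.
by apply/eqP; rewrite -(eqn_add2r (t == i)) -h1 -h2.
Qed.

Definition mdeg (a : mono) := (\sum_t mval a t)%N.

Lemma mdeg_succ i (a b : mono) : mono_succ i a b -> mdeg b = (mdeg a).+1.
Proof.
move=> /mono_succP h; rewrite /mdeg (eq_bigr _ (fun t _ => h t)) big_split /=.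
rewrite -addn1; congr (_ + _)%N; rewrite (bigD1 i) //= eqxx big1 // => t /negPf -> //.
Qed.

Definition dsucc i j (a b : mono) :=
  [forall t, mval b t == (mval a t + (t == i) + (t == j))%N].

Lemma dsuccC i j a b : dsucc i j a b = dsucc j i a b.
Proof. by apply: eq_forallb => t; rewrite addnAC. Qed.

Lemma card_mid i j (a b : mono) :
  #|[pred c | mono_succ i c b && mono_succ j a c]| = dsucc i j a b.
Proof.
case: (boolP (dsucc i j a b)) => [/forallP hd|hd].
  have hcr : forall t, (mval a t + (t == j) < r)%N.
    move=> t; have := valP (val b t); move: (eqP (hd t)); rewrite /mval => ->.
    by apply: leq_ltn_trans; rewrite -addnA leq_add2l leq_addl.
  pose cf : {ffun 'I_n -> 'I_r} := [ffun t => Ordinal (hcr t)].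
  have hsum : (\sum_t (cf t : nat) < r)%N.
    apply: leq_ltn_trans (valP b); apply: leq_sum => t _; rewrite ffunE /=.
    move: (eqP (hd t)); rewrite /mval => ->; by rewrite -addnA leq_add2l leq_addl.
  pose c : mono := exist _ cf hsum.
  have hc1 : mono_succ i c b.
    apply/mono_succP => t; rewrite (eqP (hd t)) /mval /= ffunE /=; exact: addnAC.
  have hc2 : mono_succ j a c by apply/mono_succP => t; rewrite /mval /= ffunE.
  rewrite (eq_card (B := pred1 c)) ?card1 // => c'; rewrite !inE.
  apply/andP/eqP => [[h1 h2]|->]; last by split.
  exact: succ_uniq h2 hc2.
rewrite (eq_card (B := pred0)) ?card0 // => c; rewrite !inE.
apply/negbTE; apply: contra hd => /andP [/mono_succP h1 /mono_succP h2].
by apply/forallP => t; rewrite h1 h2 addnAC.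
Qed.

Lemma mulX_lin i : linmap (@mulX k M n r i).
Proof.
move=> c u v; apply/ffunP => b; rewrite !ffunE scaler_sumr -big_split.
by apply: eq_bigr => a _; rewrite !ffunE.
Qed.

Lemma mulXX i j (f : Mr) b :
  mulX i (mulX j f) b = \sum_a f a *+ dsucc i j a b.
Proof.
rewrite ffunE (eq_bigr (fun c => \sum_(a | mono_succ j a c) f a)); last first.
  by move=> c _; rewrite ffunE.
rewrite big_mkcond /= (eq_bigr (fun c => \sum_a
   (if mono_succ i c b && mono_succ j a c then f a else 0))); last first.
  move=> c _; case: ifP => h; first by rewrite big_mkcond.
  by rewrite big1.
rewrite exchange_big /=; apply: eq_bigr => a _.
by rewrite -big_mkcond /= sumr_const card_mid.
Qed.

Lemma mulX_comm i j (f : Mr) : mulX i (mulX j f) = mulX j (mulX i f).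
Proof. by apply/ffunP => b; rewrite !mulXX; apply: eq_bigr => a _; rewrite dsuccC. Qed.

Variable x : 'I_n -> M -> M.
Hypotheses (hx : lin_ops x) (cx : comm_ops x).
Local Notation XR := (@xr k M n r x).

Definition cwM (g : M -> M) (f : Mr) : Mr := [ffun b => g (f b)].

Lemma xrE i (f : Mr) : XR i f = cwM (x i) f - mulX i f.
Proof. by []. Qed.

Lemma mulX_cwM i j (f : Mr) : mulX i (cwM (x j) f) = cwM (x j) (mulX i f).
Proof.
apply/ffunP => b; rewrite !ffunE (lf_sum (hx j)); apply: eq_bigr => a _.
by rewrite ffunE.
Qed.

Lemma cwM_lin i : linmap (cwM (x i)).
Proof. by move=> c u v; apply/ffunP => b; rewrite !ffunE hx. Qed.

Lemma xr_lin : lin_ops XR.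
Proof.
move=> i c u v; rewrite !xrE (cwM_lin i) (mulX_lin i).
by rewrite scalerBr opprD addrACA.
Qed.

Lemma xr_comm : comm_ops XR.
Proof.
move=> i j f; rewrite !xrE.
rewrite !(lfB (cwM_lin _)) !(lfB (mulX_lin _)) !mulX_cwM mulX_comm.
have -> : cwM (x i) (cwM (x j) f) = cwM (x j) (cwM (x i) f).
  by apply/ffunP => b; rewrite !ffunE cx.
by rewrite !opprB !addrA [LHS]addrAC [RHS]addrAC; congr (_ + _); exact: addrAC.
Qed.
End MrProps.
Section Shift.
Variables (k : fieldType) (V : lmodType k) (n : nat).
Variables (y : 'I_n -> V -> V) (a : 'I_n -> k).
Hypotheses (hy : lin_ops y) (cy : comm_ops y).

Lemma shift_lin : lin_ops (shift_ops y a).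
Proof.
move=> i c u v; rewrite /shift_ops hy scalerDr !scalerA mulrC -scalerA.
by rewrite scalerBr addrACA opprD.
Qed.

Lemma shift_comm : comm_ops (shift_ops y a).
Proof.
move=> i j v; rewrite /shift_ops !(lfB (hy _)) !(lfZ (hy _)) cy !scalerBr !scalerA mulrC.
rewrite !opprB !addrA [LHS]addrAC [RHS]addrAC; congr (_ + _); exact: addrAC.
Qed.

Lemma sub_shift (S : V -> Prop) : is_Psubmodule y S <-> is_Psubmodule (shift_ops y a) S.
Proof.
split => -[S0 SD SZ Sy]; split => // i u hu.
- rewrite /shift_ops; apply: SD; first exact: Sy.
  by rewrite -scaleNr; apply: SZ.
- have -> : y i u = shift_ops y a i u + a i *: u by rewrite /shift_ops subrK.
  by apply: SD; [apply: Sy | apply: SZ].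
Qed.

Lemma ACCin_shift (T : V -> Prop) : ACCin y T -> ACCin (shift_ops y a) T.
Proof. by move=> A S hS; apply: A => m; apply/sub_shift. Qed.

Lemma kexact_Ex : koszul_exact y <-> forall q, Ex y (fun _ => True) q.
Proof.
split => [h q z zd zc _ | h q z [zd zc]].
  by have [g [gd ge]] := h q z (conj zd zc); exists g.
by have [g [gd _ ge]] := h q z zd zc (fun _ => I); exists g.
Qed.
End Shift.

Lemma Ex_equiv (k : fieldType) (V : lmodType k) (n : nat) (y : 'I_n -> V -> V)
  (T T' : V -> Prop) q : (forall v, T v <-> T' v) -> Ex y T q -> Ex y T' q.
Proof.
move=> e E z zd zc zT.
have [g [gd gT ge]] := E z zd zc (fun S => (e _).2 (zT S)).
by exists g; split => // S; apply/e.
Qed.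

Section MrGood.
Variables (k : fieldType) (M : lmodType k) (n r : nat).
Local Notation mono := (mono n r).
Local Notation Mr := (Mr M n r).
Variable x : 'I_n -> M -> M.
Local Notation XR := (@xr k M n r x).

Definition goodM (A : {set mono}) :=
  forall i a b, a \in A -> mono_succ i a b -> b \in A.

Lemma xr_at i (f : Mr) b :
  (forall a, mono_succ i a b -> f a = 0) -> XR i f b = x i (f b).
Proof.
move=> h; rewrite !ffunE big1 ?subr0 // => a /h ->; done.
Qed.

Hypotheses (hx : lin_ops x).

Lemma goodM_stab A : goodM A -> is_Psubmodule XR (supp A).
Proof.
move=> gA; split.
- by move=> c _; rewrite ffunE.
- by move=> u v hu hv c cA; rewrite ffunE hu // hv // addr0.
- by move=> c u hu d dA; rewrite ffunE hu // scaler0.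
- move=> i u hu c cA; rewrite xr_at ?hu ?(lf0 (hx i)) //.
  move=> a ac; apply: hu; apply: contra cA => aA; exact: gA aA ac.
Qed.

Lemma goodM_step A : goodM A -> A != set0 -> exists2 b, b \in A &
   goodM (A :\ b) /\ forall i (f : Mr), supp A f -> XR i f b = x i (f b).
Proof.
move=> gA /set0Pn [b0 b0A].
case: (arg_minnP (@mdeg n r) b0A) => b bA bmin.
have nopred : forall i a, mono_succ i a b -> a \notin A.
  move=> i a ab; apply/negP => aA; have := bmin a aA.
  by rewrite (mdeg_succ ab) ltnn.
exists b => //; split.
  move=> i a c; rewrite !inE => /andP [ab aA] ac; rewrite (gA i a c aA ac) andbT.
  apply/eqP => cb; move: ac; rewrite cb => ac.
  by have := nopred i a ac; rewrite aA.
move=> i f hf; apply: xr_at => a ab; apply: hf; exact: nopred ab.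
Qed.

Lemma goodM_setT : goodM setT.
Proof. by move=> *; rewrite inE. Qed.

Variable hr : (0 < r)%N.
Definition m0f : {ffun 'I_n -> 'I_r} := [ffun _ => Ordinal hr].
Lemma m0P : (\sum_(i < n) (m0f i : nat) < r)%N.
Proof. by rewrite big1 // => i _; rewrite ffunE. Qed.
Definition m0 : mono := exist _ m0f m0P.

Lemma mdeg_m0 : mdeg m0 = 0%N.
Proof. by rewrite /mdeg big1 // => i _; rewrite /mval /= ffunE. Qed.

Lemma goodM_A0 : goodM (setT :\ m0).
Proof.
move=> i a b _ ab; rewrite !inE andbT; apply/eqP => e.
by have := mdeg_succ ab; rewrite e mdeg_m0.
Qed.

Lemma xr_m0 i (f : Mr) : XR i f m0 = x i (f m0).
Proof. apply: xr_at => a am; by have := mdeg_succ am; rewrite mdeg_m0. Qed.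
End MrGood.
Theorem lemma4p1 (k : closedFieldType) (M : lmodType k) (n : nat)
  (x : 'I_n -> M -> M) :
  noetherian_Pmodule x ->
  forall r : nat, (1 <= r)%N ->
    noetherian_Pmodule (@xr k M n r x) /\
    (forall a : 'I_n -> k,
        taylor_spectrum (@xr k M n r x) a <-> taylor_spectrum x a) /\
    (forall (p : nat) (a : 'I_n -> k),
        homology_findim (shift_ops (@xr k M n r x) a) p).
Proof.
move=> [[hx cx] AM] r hr.
have hx' : lin_ops x := hx.
have cx' : comm_ops x := cx.
have AX : ACCin x (fun _ => True).
  by move=> S h1 h2 _; apply: AM.
have hX := @xr_lin k M n r x hx'.
have cX := @xr_comm k M n r x hx' cx'.
have AXR : ACCin (@xr k M n r x) (fun _ => True).
  apply: (ACCin_mono (T := supp setT)); last by move=> f _ c; rewrite inE.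
  apply: (@acc_supp k (mono n r) M n (@xr k M n r x) x (@goodM n r)) => //.
  - by move=> A gA; apply: goodM_stab.
  - by move=> A gA nA; apply: goodM_step.
  - exact: goodM_setT.
split; first by split => // S h1 h2; apply: AXR.
split; last first.
  move=> p a; apply: findim_of_acc.
  - exact: shift_lin.
  - exact: shift_comm.
  - exact: ACCin_shift.
move=> a; rewrite /taylor_spectrum; split; apply: contra_not.
  move/(kexact_Ex (shift_ops x a)) => Ex1; apply/kexact_Ex => q.
  apply: (Ex_equiv (T := supp setT)); first by move=> v; split => // _ c; rewrite inE.
  apply: (@ex_supp k (mono n r) M n (shift_ops (@xr k M n r x) a) (shift_ops x a) (@goodM n r)).
  - exact: shift_lin.
  - exact: shift_comm.
  - by move=> A gA; apply/(sub_shift (@xr k M n r x) a); apply: goodM_stab.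
  - move=> A gA nA; have [b bA [gb hb]] := goodM_step x gA nA.
    by exists b => //; split => // i f hf; rewrite /shift_ops -(hb i f hf) !ffunE.
  - exact: Ex1.
  - exact: goodM_setT.
move/(kexact_Ex (shift_ops (@xr k M n r x) a)) => Ex1; apply/kexact_Ex => q.
elim: q => [|q IH].
  apply: (@ex_chase k (Mr M n r) M n (shift_ops (@xr k M n r x) a) (shift_ops x a)
     (evb (m0 n hr)) (sgb (m0 n hr)) (supp (setT :\ m0 n hr))).
  - exact: shift_lin.
  - exact: shift_comm.
  - exact: evb_lin.
  - exact: sgb_lin.
  - by move=> u; rewrite /evb ffunE eqxx.
  - by move=> i v; rewrite /evb /shift_ops -(xr_m0 x hr i v) !ffunE.
  - by move=> v hv; apply: hv; rewrite !inE eqxx.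
  - by move=> v hv c; rewrite !inE andbT negbK => /eqP ->.
  - exact: Ex1.
  - by [].
apply: (@ex_chase k (Mr M n r) M n (shift_ops (@xr k M n r x) a) (shift_ops x a)
   (evb (m0 n hr)) (sgb (m0 n hr)) (supp (setT :\ m0 n hr))).
- exact: shift_lin.
- exact: shift_comm.
- exact: evb_lin.
- exact: sgb_lin.
- by move=> u; rewrite /evb ffunE eqxx.
- by move=> i v; rewrite /evb /shift_ops -(xr_m0 x hr i v) !ffunE.
- by move=> v hv; apply: hv; rewrite !inE eqxx.
- by move=> v hv c; rewrite !inE andbT negbK => /eqP ->.
- exact: Ex1.
move=> _ /=.
apply: (@ex_supp k (mono n r) M n (shift_ops (@xr k M n r x) a) (shift_ops x a) (@goodM n r)).
- exact: shift_lin.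
- exact: shift_comm.
- by move=> A gA; apply/(sub_shift (@xr k M n r x) a); apply: goodM_stab.
- move=> A gA nA; have [b bA [gb hb]] := goodM_step x gA nA.
  by exists b => //; split => // i f hf; rewrite /shift_ops -(hb i f hf) !ffunE.
- exact: IH.
- exact: goodM_A0.
Qed.
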